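(* For every $T$, every sequence of forecasts $\mathbf p\in[0,1]^T$ and outcomes $\mathbf x\in\{0,1\}^T$, there exist a finite action set $\mathcal A$ and a bounded utility function $u:\mathcal A\times\{0,1\}\to[-1,1]$ such that $\mathrm{AgentSwapReg}_u(\mathbf p,\mathbf x)\ge\mathrm{Cal}_2(\mathbf p,\mathbf x)$.
   Context: For forecast $p$, an agent with action set $\mathcal A$ and utility $u$ plays $a(p)\in\arg\max_{a\in\mathcal A}\mathbb E_{x\sim\mathrm{Ber}(p)}[u(a,x)]$. The agent swap regret is $\mathrm{AgentSwapReg}_u(\mathbf p,\mathbf x)=\max_{\pi:\mathcal A\to\mathcal A}\sum_{t=1}^T u(\pi(a(p_t)),x_t)-\sum_{t=1}^T u(a(p_t),x_t)$. With $n_p=|\{t:p_t=p\}|$, $m_p=|\{t:p_t=p,\ x_t=1\}|$, the $L_2$-calibration error is $\mathrm{Cal}_2(\mathbf p,\mathbf x)=\sum_p n_p(p-m_p/n_p)^2$ (sum over $p$ with $n_p>0$). *)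

(* Defs.v *)
From HB Require Import structures.
From mathcomp Require Import all_boot all_order all_algebra.
From mathcomp Require Import reals.
Set Implicit Arguments. Unset Strict Implicit. Unset Printing Implicit Defensive.
Import Order.TTheory GRing.Theory Num.Theory.
Local Open Scope ring_scope.

Section Defs.
Variable R : realType.

Definition exp_util (A : Type) (u : A -> bool -> R) (a : A) (q : R) : R :=
  (1 - q) * u a false + q * u a true.

Definition best_response (A : Type) (u : A -> bool -> R) (br : R -> A) : Prop :=
  forall q : R, 0 <= q <= 1 -> forall a : A, exp_util u a q <= exp_util u (br q) q.

Definition swap_gain (A : finType) (u : A -> bool -> R) (br : R -> A)
  (T : nat) (p : 'I_T -> R) (x : 'I_T -> bool) (pi : A -> A) : R :=
  \sum_(t < T) u (pi (br (p t))) (x t) - \sum_(t < T) u (br (p t)) (x t).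

(* AgentSwapReg = max over all pi : A -> A of swap_gain.  The identity map
   gives gain 0, so the neutral element 0 of the iterated max is harmless. *)
Definition agent_swap_reg (A : finType) (u : A -> bool -> R) (br : R -> A)
  (T : nat) (p : 'I_T -> R) (x : 'I_T -> bool) : R :=
  \big[Num.max/0]_(pi : {ffun A -> A}) swap_gain u br p x pi.

Definition n_of (T : nat) (p : 'I_T -> R) (q : R) : R :=
  #|[set t : 'I_T | p t == q]|%:R.
Definition m_of (T : nat) (p : 'I_T -> R) (x : 'I_T -> bool) (q : R) : R :=
  #|[set t : 'I_T | (p t == q) && x t]|%:R.

(* Cal_2 = sum over distinct forecast values q (those with n_q > 0). *)
Definition cal2 (T : nat) (p : 'I_T -> R) (x : 'I_T -> bool) : R :=
  \sum_(q <- undup [seq p t | t <- enum 'I_T])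
     n_of p q * (q - m_of p x q / n_of p q) ^+ 2.
End Defs.

(* Main.v *)
Require Import Defs.
From HB Require Import structures.
From mathcomp Require Import all_boot all_order all_algebra.
From mathcomp Require Import reals ring lra.
Import Order.TTheory GRing.Theory Num.Theory.
Local Open Scope ring_scope.

Lemma m_ofE (R : realType) T (p : 'I_T -> R) x q :
  m_of p x q = \sum_(t | p t == q) (x t)%:R.
Proof.
rewrite [RHS](eq_bigr (fun t => if x t then 1 else 0)); last by move=> t _; case: (x t).
rewrite -big_mkcondr /= sumr_const; congr (_ *+ _); apply: eq_card => t; by rewrite !inE.
Qed.

Lemma partition_sum (R : realType) T (p : 'I_T -> R) (G : 'I_T -> R) :
  \sum_t G t = \sum_(q <- undup [seq p t | t <- enum 'I_T]) \sum_(t | p t == q) G t.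
Proof.
under [RHS]eq_bigr do rewrite big_mkcond /=.
rewrite exchange_big /=; apply: eq_bigr => t _.
have ht : p t \in undup [seq p t | t <- enum 'I_T].
  by rewrite mem_undup; apply: map_f; rewrite mem_enum.
rewrite (bigD1_seq _ ht (undup_uniq _)) /= eqxx big1 ?addr0 //.
by move=> q /negPf; rewrite eq_sym => ->.
Qed.

Lemma maxbig_ge (A : finType) (R : realType) (F : A -> R) i0 :
  F i0 <= \big[Num.max/0]_(i : A) F i.
Proof.
rewrite unlock /reducebig.
elim: (index_enum A) (mem_index_enum i0) => //= a s IH.
rewrite in_cons => /orP [/eqP <-| /IH h]; rewrite le_max ?lexx ?h ?orbT //.
Qed.

Lemma n_ofE (R : realType) T (p : 'I_T -> R) q :
  n_of p q = \sum_(t | p t == q) 1.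
Proof. by rewrite /n_of sumr_const cardsE. Qed.

Lemma freq01 (R : realType) T (p : 'I_T -> R) x t :
  0 <= m_of p x (p t) / n_of p (p t) <= 1.
Proof.
have hn : 0 < n_of p (p t).
  rewrite /n_of ltr0n card_gt0; apply/set0Pn; exists t; by rewrite inE.
have hm : m_of p x (p t) <= n_of p (p t).
  rewrite /m_of /n_of ler_nat; apply: subset_leq_card; apply/subsetP => s.
  by rewrite !inE => /andP [].
apply/andP; split; first by rewrite divr_ge0 // /m_of ler0n.
by rewrite ler_pdivrMr // mul1r.
Qed.

Theorem theorem4p12 (R : realType) (T : nat) (p : 'I_T -> R) (x : 'I_T -> bool) :
  (forall t, 0 <= p t <= 1) ->
  exists (A : finType) (u : A -> bool -> R),
    (forall a b, -1 <= u a b <= 1) /\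
    (exists br : R -> A, best_response u br) /\
    (forall br : R -> A, best_response u br ->
       agent_swap_reg u br p x >= cal2 p x).
Proof.
move=> hp.
pose f q := m_of p x q / n_of p q.
pose S := 0 :: [seq p t | t <- enum 'I_T] ++ [seq f (p t) | t <- enum 'I_T].
have hS : forall v, v \in S -> 0 <= v <= 1.
  move=> v; rewrite inE mem_cat => /orP [/eqP ->|/orP [/mapP [t _ ->]|/mapP [t _ ->]]].
  - by rewrite lexx ler01.
  - exact: hp.
  - exact: freq01.
pose A := seq_sub S.
have a0 : A by exists 0; rewrite inE eqxx.
pose u (a : A) (b : bool) : R := - (val a - (b : nat)%:R) ^+ 2.
have hEU : forall a q, exp_util u a q = - (val a - q) ^+ 2 - q * (1 - q).
  by move=> a q; rewrite /exp_util /u /=; ring.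
exists A, u; split.
  move=> a b; have := hS (val a) (ssvalP a); rewrite /u.
  by case: b => /= /andP [h0 h1]; apply/andP; split; nra.
split.
  exists (fun q => [arg max_(a > a0) exp_util u a q]%O) => q _ a.
  by case: (arg_maxP (fun a => exp_util u a q) (isT : (xpredT a0))) => i _; apply.
move=> br hbr.
have hbrt : forall t, val (br (p t)) = p t.
  move=> t.
  have ht : p t \in S by rewrite inE mem_cat map_f ?mem_enum ?orbT.
  have := hbr (p t) (hp t) (insubd a0 (p t)).
  rewrite !hEU insubdK // subrr expr0n /= => h.
  have h2 : (ssval (br (p t)) - p t) ^+ 2 <= 0 by lra.
  apply/eqP; rewrite -subr_eq0 -sqrf_eq0 eq_le h2 sqr_ge0 //.
pose pi := [ffun a : A => insubd a0 (f (val a))].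
have H := @maxbig_ge _ _ (fun g : {ffun A -> A} => swap_gain u br p x g) pi. rewrite /agent_swap_reg; refine (le_trans _ H).
rewrite /swap_gain -sumrB.
have -> : \sum_(i < T) (u (pi (br (p i))) (x i) - u (br (p i)) (x i)) =
   \sum_(i < T) ((p i - (x i)%:R) ^+ 2 - (f (p i) - (x i)%:R) ^+ 2).
  apply: eq_bigr => t _; rewrite /u ffunE hbrt insubdK; first by rewrite opprK addrC.
  by rewrite inE mem_cat (map_f (fun t => f (p t))) ?mem_enum ?orbT.
rewrite (partition_sum _ _ p) /cal2 le_eqVlt; apply/orP; left; apply/eqP.
apply: eq_big_seq => q; rewrite mem_undup => /mapP [t _ ->].
have -> : \sum_(s | p s == p t) ((p s - (x s)%:R) ^+ 2 - (f (p s) - (x s)%:R) ^+ 2) =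
   \sum_(s | p s == p t) ((p t ^+ 2 - f (p t) ^+ 2) * 1 - 2 * (p t - f (p t)) * (x s)%:R).
  apply: eq_bigr => s /eqP ->.
  ring.
rewrite sumrB -!mulr_sumr -n_ofE -m_ofE.
have hn : n_of p (p t) != 0.
  by rewrite /n_of pnatr_eq0 -lt0n card_gt0; apply/set0Pn; exists t; rewrite inE.
rewrite /f; field.
by [].
Qed.
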